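(* Let $\mathcal H$ be a separable Hilbert space, $(X,\mathcal M,\mu)$ a $\sigma$-finite measure space, and $\{\phi_t\}_{t\in X}$ a continuous Bessel family over $X$ in $\mathcal H$. Let $\mathcal M'\subset\mathcal M$ be the $\sigma$-algebra generated by the sets $\{t\in X:\phi_t\in U\}$, where $U$ ranges over open subsets of $\mathcal H$. Then the measure algebra associated with $(X,\mathcal M',\mu)$ is separable.
   Context: A family $\{\phi_t\}_{t\in X}$ of vectors in $\mathcal H$ is a continuous Bessel family (with bound $B$) over the measure space $(X,\mu)$ if (i) for each $f\in\mathcal H$ the function $t\mapsto\langle f,\phi_t\rangle$ is measurable, and (ii) there is $B<\infty$ with $\int_X|\langle f,\phi_t\rangle|^2\,d\mu(t)\le B\|f\|^2$ for all $f\in\mathcal H$. The measure algebra of a measure space $(X,\mathcal N,\mu)$ consists of equivalence classes of sets in $\mathcal N$ under $E\sim F\iff\mu(E\triangle F)=0$; it is called separable if the set of (classes of) sets of finite measure with the metric $\rho(E,F)=\mu(E\triangle F)$ is a separable metric space. *)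

(* Defs.v *)
From HB Require Import structures.
From mathcomp Require Import all_boot all_order all_algebra.
From mathcomp Require Import all_classical all_reals all_analysis.
From mathcomp Require Import complex.

Set Implicit Arguments.
Unset Strict Implicit.
Unset Printing Implicit Defensive.

Import Order.TTheory GRing.Theory Num.Theory.
Import numFieldNormedType.Exports.

Local Open Scope classical_set_scope.
Local Open Scope ring_scope.

(* A complex Hilbert space: a complete real normed space H (this gives the
   norm topology and completeness) equipped with a complex scalar action
   extending the real one and a complex inner product (linear in the first
   argument, conjugate symmetric) inducing the norm. *)
Record complex_hilbert (R : realType) (H : completeNormedModType R) :=
  ComplexHilbert {
  csc : R[i] -> H -> H;
  ip : H -> H -> R[i];
  csc_real : forall (r : R) (x : H), csc (r%:C)%C x = r *: x;
  csc_mul : forall (a b : R[i]) (x : H), csc (a * b) x = csc a (csc b x);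
  csc_addr : forall (a : R[i]) (x y : H), csc a (x + y) = csc a x + csc a y;
  csc_addl : forall (a b : R[i]) (x : H), csc (a + b) x = csc a x + csc b x;
  ip_linl : forall (a : R[i]) (x y z : H),
      ip (csc a x + y) z = a * ip x z + ip y z;
  ip_conj : forall x y : H, ip y x = ((ip x y)^*)%C;
  ip_norm : forall x : H, ip x x = ((`|x| ^+ 2)%:C)%C }.

Definition separable_space (T : topologicalType) :=
  exists D : set T, countable D /\ closure D = [set: T].

Definition sqmod (R : realType) (z : R[i]) : R :=
  (complex.Re z) ^+ 2 + (complex.Im z) ^+ 2.

(* Continuous Bessel family over (X, mu) in H. Measurability of the
   complex-valued function t |-> <f, phi_t> is measurability of its real and
   imaginary parts (Borel sigma-algebra of C = R^2). *)
Definition continuous_bessel (R : realType) (d : measure_display)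
  (X : measurableType d) (mu : {measure set X -> \bar R})
  (H : completeNormedModType R) (hs : complex_hilbert H) (phi : X -> H) :=
  (forall f : H,
      measurable_fun setT (fun t => complex.Re (ip hs f (phi t))) /\
      measurable_fun setT (fun t => complex.Im (ip hs f (phi t)))) /\
  exists B : R, forall f : H,
    (\int[mu]_t (sqmod (ip hs f (phi t)))%:E <= (B * `|f| ^+ 2)%:E)%E.

Definition symdiff (T : Type) (A B : set T) : set T := (A `\` B) `|` (B `\` A).

(* The measure algebra of (X, M, mu) is separable: the sets of M with finite
   measure, with pseudometric rho(E,F) = mu(E symdiff F), form a separable
   (pseudo)metric space, i.e. admit a countable dense subfamily. *)
Definition measure_algebra_separable (R : realType) (X : Type)
  (M : set (set X)) (mu : set X -> \bar R) :=
  exists D : set (set X),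
    countable D /\
    D `<=` [set E | M E /\ (mu E < +oo)%E] /\
    forall E, M E -> (mu E < +oo)%E ->
      forall eps : R, 0 < eps ->
        exists2 F, D F & (mu (symdiff E F) < eps%:E)%E.

(* Main.v *)
Require Import Defs.
From HB Require Import structures.
From mathcomp Require Import all_boot all_order all_algebra.
From mathcomp Require Import all_classical all_reals all_analysis.
From mathcomp Require Import complex.
From mathcomp Require Import ring lra measurable_realfun.
Set Implicit Arguments.
Unset Strict Implicit.
Unset Printing Implicit Defensive.
Import Order.TTheory GRing.Theory Num.Theory.
Import numFieldNormedType.Exports.
Local Open Scope classical_set_scope.
Local Open Scope ring_scope.
Section Hilb.
Variables (R : realType) (H : completeNormedModType R) (hs : complex_hilbert H).
Local Notation ip := (ip hs).
Local Notation csc := (csc hs).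

Lemma csc1 (x : H) : csc 1 x = x.
Proof. by have := csc_real hs 1 x; rewrite rmorph1 scale1r. Qed.

Lemma ip_addl (x y z : H) : ip (x + y) z = ip x z + ip y z.
Proof. by have := ip_linl hs 1 x y z; rewrite csc1 mul1r. Qed.

Lemma ip0l (z : H) : ip 0 z = 0.
Proof.
have := ip_addl 0 0 z; rewrite addr0 => /(congr1 (fun a => a - ip 0 z)).
by rewrite subrr addrK => ->.
Qed.

Lemma ip_scalel (r : R) (x z : H) : ip (r *: x) z = (r%:C)%C * ip x z.
Proof. by have := ip_linl hs (r%:C)%C x 0 z; rewrite addr0 ip0l addr0 csc_real. Qed.

Lemma ip_addr (x y z : H) : ip z (x + y) = ip z x + ip z y.
Proof. by rewrite [LHS]ip_conj ip_addl rmorphD [ip z x]ip_conj [ip z y]ip_conj. Qed.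

Lemma ip_scaler (r : R) (x z : H) : ip z (r *: x) = (r%:C)%C * ip z x.
Proof. by rewrite [LHS]ip_conj ip_scalel rmorphM /= [ip z x]ip_conj oppr0. Qed.

Definition re (f y : H) : R := complex.Re (ip f y).

Lemma re_sym f y : re f y = re y f.
Proof. by rewrite /re [ip y f]ip_conj; case: (ip f y). Qed.

Lemma re_addl x y z : re (x + y) z = re x z + re y z.
Proof. by rewrite /re ip_addl; case: (ip x z); case: (ip y z). Qed.

Lemma re_addr x y z : re z (x + y) = re z x + re z y.
Proof. by rewrite re_sym re_addl !(re_sym z). Qed.

Lemma re_scalel r x z : re (r *: x) z = r * re x z.
Proof. rewrite /re ip_scalel; case: (ip x z) => a b /=; by rewrite mul0r subr0. Qed.

Lemma re_scaler r x z : re z (r *: x) = r * re z x.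
Proof. by rewrite re_sym re_scalel re_sym. Qed.

Lemma re_self x : re x x = `|x| ^+ 2.
Proof. by rewrite /re ip_norm. Qed.

Lemma re_oppl x z : re (- x) z = - re x z.
Proof. by rewrite -scaleN1r re_scalel mulN1r. Qed.

Lemma re_oppr x z : re z (- x) = - re z x.
Proof. by rewrite re_sym re_oppl re_sym. Qed.

Lemma re0l z : re 0 z = 0.
Proof. by rewrite /re ip0l. Qed.

Lemma re0r z : re z 0 = 0.
Proof. by rewrite re_sym re0l. Qed.

Lemma re_subl x y z : re (x - y) z = re x z - re y z.
Proof. by rewrite re_addl re_oppl. Qed.

Lemma re_subr x y z : re z (x - y) = re z x - re z y.
Proof. by rewrite re_addr re_oppr. Qed.

Lemma re_cs f y : re f y <= `|f| * `|y|.
Proof.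
have [f0|fn0] := eqVneq f 0; first by rewrite f0 re0l normr0 mul0r.
have [y0|yn0] := eqVneq y 0; first by rewrite y0 re0r normr0 mulr0.
set a := `|f|; set b := `|y|.
have ha : 0 < a by rewrite normr_gt0.
have hb : 0 < b by rewrite normr_gt0.
have := re_self (b *: f - a *: y).
rewrite re_subl !re_subr !re_scalel !re_scaler !re_self (re_sym y f) -/a -/b.
move=> E.
have h0 : 0 <= `|b *: f - a *: y| ^+ 2 by rewrite sqr_ge0.
rewrite -E in h0.
have hab : 0 < a * b by rewrite mulr_gt0.
nra.
Qed.

Lemma re_cs_abs f y : `|re f y| <= `|f| * `|y|.
Proof.
rewrite ler_norml re_cs andbT.
by have := re_cs (- f) y; rewrite re_oppl normrN lerNl.
Qed.
End Hilb.

Lemma small_inv (R : realType) (a : R) : 0 < a -> exists m : nat, (m.+1%:R)^-1 < a.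
Proof.
move=> a0; exists (Num.truncn a^-1).
have h := truncnS_gt a^-1.
rewrite -[X in _ < X](invrK a) ltf_pV2 ?posrE ?invr_gt0 //.
Qed.

Section Part2.
Variables (R : realType) (H : completeNormedModType R) (hs : complex_hilbert H).
Variable e : nat -> H.
Hypothesis he : forall (y : H) (del : R), 0 < del -> exists n, `|e n - y| < del.
Local Notation re := (re hs).

Lemma re_zero (y : H) : (forall n, re (e n) y = 0) -> y = 0.
Proof.
move=> hy; apply/eqP; rewrite -normr_eq0; apply/eqP.
have b0 := normr_ge0 y.
apply/eqP; rewrite eq_le b0 andbT; apply/negP => /negP; rewrite -ltNge => yp.
have [|n hn] := @he y (`|y| / 2); first by rewrite divr_gt0.
have := re_self hs y.
have E : re y y = re (y - e n) y + re (e n) y by rewrite -re_addl subrK.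
rewrite E hy addr0 => E2.
have h := re_cs hs (y - e n) y.
have hd : `|y - e n| = `|e n - y| by rewrite distrC.
rewrite hd E2 in h.
nra.
Qed.

Lemma norm_gt_iff (c : R) (y : H) : 0 <= c ->
  (c < `|y|) <-> exists n, c * `|e n| < re (e n) y.
Proof.
move=> c0; split; last first.
  move=> [n hn]; have := re_cs hs (e n) y; have := normr_ge0 (e n).
  move=> h0 h1; rewrite ltNge; apply/negP => hyc; nra.
move=> hy; set b := `|y| in hy *.
set del := b * (b - c) / (2 * (b + c)).
have bc0 : 0 < b + c by lra.
have hdel : del * (b + c) * 2 = b * (b - c).
  by rewrite /del; field; apply/eqP; lra.
have dp : 0 < del by rewrite /del divr_gt0 ?mulr_gt0; lra.
have [n hn] := @he y del dp.
exists n.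
have E : re (e n) y = re y y + re (e n - y) y by rewrite -re_addl addrC subrK.
have h1 := re_cs_abs hs (e n - y) y.
have h2 : `|e n| <= b + `|e n - y|.
  by rewrite /b -[X in `|X|](subrK y) addrC ler_normD.
rewrite E re_self -/b.
move: h1; rewrite ler_norml => /andP[h1 _].
set u := `|e n - y| in hn h1 h2 *.
have u0 : 0 <= u by rewrite normr_ge0.
rewrite -/b in h1.
have k1 : u * (b + c) < del * (b + c) by rewrite ltr_pM2r.
have k2 : c * `|e n| <= c * (b + u) by rewrite ler_wpM2l.
clearbody del.
nra.
Qed.
End Part2.

Lemma meas_gt d (X : measurableType d) (R : realType) (g : X -> R) (a : R) :
  measurable_fun setT g -> measurable [set t | a < g t].
Proof.
move=> mg; have := mg measurableT _ (measurable_itv `]a, +oo[).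
by rewrite setTI; congr measurable; apply/seteqP; split => t /=; rewrite in_itv /= andbT.
Qed.

Section Part3.
Variables (R : realType) (H : completeNormedModType R) (hs : complex_hilbert H).
Variable e : nat -> H.
Hypothesis he : forall (y : H) (del : R), 0 < del -> exists n, `|e n - y| < del.
Variables (d : measure_display) (X : measurableType d) (phi : X -> H).
Hypothesis hm : forall f, measurable_fun setT (fun t => re hs f (phi t)).

Lemma meas_norm_gt (x : H) (c : R) : 0 <= c ->
  measurable [set t | c < `|phi t - x|].
Proof.
move=> c0.
have -> : [set t | c < `|phi t - x|] =
   \bigcup_n [set t | c * `|e n| < re hs (e n) (phi t) - re hs (e n) x].
  apply/seteqP; split => t /=.
    by move/(norm_gt_iff hs he _ c0) => [n hn]; exists n => //=; rewrite -re_subr.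
  by move=> [n _ /= hn]; apply/(norm_gt_iff hs he _ c0); exists n; rewrite re_subr.
apply: bigcupT_measurable => n; apply: meas_gt.
by apply: measurable_realfun.measurable_funB => //; exact: measurable_cst.
Qed.

Lemma meas_ball (x : H) (r : R) : 0 < r -> measurable (phi @^-1` ball x r).
Proof.
move=> r0.
have -> : phi @^-1` ball x r =
   \bigcup_m ~` [set t | r - r / m.+1%:R < `|phi t - x|].
  apply/seteqP; split => t /=.
    rewrite -ball_normE /ball_ /= distrC => hb.
    have [m hm'] : exists m : nat, (m.+1%:R)^-1 < (r - `|phi t - x|) / r.
      by apply: small_inv; rewrite divr_gt0 // subr_gt0.
    exists m => //=; apply/negP; rewrite -leNgt.
    rewrite ltr_pdivlMr // in hm'.
    have h3 : r / m.+1%:R < r - `|phi t - x| by rewrite mulrC.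
    move: h3; set q := r / m.+1%:R; set v := `|phi t - x|. lra.
  move=> [m _ /= /negP]; rewrite -leNgt -ball_normE /ball_ /= distrC => h.
  have : 0 < r / m.+1%:R by rewrite divr_gt0.
  move: h; set q := r / m.+1%:R; set v := `|_|. lra.
apply: bigcupT_measurable => m; apply: measurableC; apply: meas_norm_gt.
by rewrite subr_ge0 ler_pdivrMr // ler_peMr ?(ltW r0) // ler1n.
Qed.
End Part3.

Lemma sigma_pairs T (S : set (set T)) : sigma_algebra setT S ->
  forall F : nat * nat -> set T, (forall p, S (F p)) -> S (\bigcup_p F p).
Proof.
move=> [_ _ SU] F SF.
have -> : \bigcup_p F p = \bigcup_n F (odflt (0%N, 0%N) (unpickle n)).
  apply/seteqP; split => t [p _ hp].
    by exists (pickle p) => //; rewrite pickleK.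
  by exists (odflt (0%N, 0%N) (unpickle p)).
by apply: SU => n; exact: SF.
Qed.

Section Part4.
Variables (R : realType) (H : completeNormedModType R).
Variable e : nat -> H.
Hypothesis he : forall (y : H) (del : R), 0 < del -> exists n, `|e n - y| < del.
Variables (d : measure_display) (X : measurableType d) (phi : X -> H).

Definition Gs (p : nat * nat) : set X :=
  phi @^-1` ball (e p.1) (p.2.+1%:R^-1 : R).

Definition Mp := smallest (sigma_algebra setT)
       [set phi @^-1` U | U in [set U : set H | open U]].

Lemma Mp_sigma : sigma_algebra setT Mp.
Proof. exact: smallest_sigma_algebra. Qed.

Lemma Gs_Mp p : Mp (Gs p).
Proof. move=> S [_ GS]; apply: GS; exists (ball (e p.1) (p.2.+1%:R^-1)) => //; exact: ball_open. Qed.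

Lemma gen_sub (S : set (set X)) : sigma_algebra setT S -> (forall p, S (Gs p)) ->
  Mp `<=` S.
Proof.
move=> sS SG; apply: smallest_sub => // A [U oU <-].
have -> : phi @^-1` U = \bigcup_p
   [set t | ball (e p.1) (p.2.+1%:R^-1 : R) `<=` U /\ Gs p t].
  apply/seteqP; split => t /=.
    move=> Ut; move: oU; rewrite openE => /(_ _ Ut); rewrite /interior.
    move/nbhs_ballP. rewrite /nbhs_ball /nbhs_ball_ /filter_from /=. move=> [r /= r0 hr].
    have [|m hm] := @small_inv R (r / 2); first by rewrite divr_gt0.
    have [|n hn] := @he (phi t) (m.+1%:R^-1); first by rewrite invr_gt0.
    exists (n, m) => //=; split; last by rewrite /Gs /= -ball_normE /ball_ /=.
    move=> z; rewrite -ball_normE /ball_ /= => hz; apply: hr.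
    rewrite -ball_normE /ball_ /=.
    have tri : `|phi t - z| <= `|phi t - e n| + `|e n - z|.
      exact: ler_distD.
    rewrite distrC in hn.
    move: tri hn hz hm; set q := (m.+1%:R^-1 : R).
    have h3 : r / 2 * 2 = r by rewrite divfK.
    set h2 := r / 2 in h3 *; clearbody h2; lra.
  by move=> [p _ [hb hg]]; apply: hb.
apply: sigma_pairs => // p.
have [hb|hb] := pselect (ball (e p.1) (p.2.+1%:R^-1 : R) `<=` U).
  by rewrite (_ : [set t | _ /\ _] = Gs p) //; apply/seteqP; split => t /= => [[]|]. 
rewrite (_ : [set t | _ /\ _] = set0); last by apply/seteqP; split => t /= => [[]|].
by case: sS.
Qed.

Fixpoint interp (t : GenTree.tree (nat * nat)) : set X :=
  match t with
  | GenTree.Leaf p => Gs p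
  | GenTree.Node 0 [:: a] => ~` interp a
  | GenTree.Node 1 [:: a; b] => interp a `|` interp b
  | _ => set0
  end.

Lemma interp_ind (P : set (set X)) : P set0 -> (forall A, P A -> P (~` A)) ->
  (forall A B, P A -> P B -> P (A `|` B)) -> (forall p, P (Gs p)) ->
  forall t, P (interp t).
Proof.
move=> P0 PC PU PG; fix IH 1; case => [p|n l] /=; first exact: PG.
case: n => [|[|n]].
- case: l => [|a [|b l]] //; exact: PC.
- case: l => [|a [|b [|c l]]] //; exact: PU.
- by [].
Qed.
End Part4.

Lemma ev_small (R : realType) (u : nat -> \bar R) : u @ \oo --> 0%E ->
  forall eps : R, 0 < eps -> exists N, (u N < eps%:E)%E.
Proof.
move=> hu eps e0.
have hA : nbhs (0%E : \bar R) `]-oo, eps%:E[%classic.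
  apply: open_nbhs_nbhs; split; first exact: lray_open.
  by rewrite /= in_itv /= lte_fin.
have [N _ hN] := hu _ hA.
exists N; have := hN N (leqnn N).
by rewrite /= in_itv.
Qed.

Lemma sig_setU T (S : set (set T)) A B : sigma_algebra setT S -> S A -> S B -> S (A `|` B).
Proof.
move=> [S0 _ SU] SA SB; rewrite -bigcup2E; apply: SU => -[|[|n]] //=.
Qed.

Lemma symdiffC_eq T (A B : set T) : symdiff (~` A) (~` B) = symdiff A B.
Proof.
rewrite /symdiff; apply/seteqP; split => t /=; rewrite /setD /=.
- by case=> -[h1 h2]; [right|left]; split => //; apply: contrapT.
- by case=> -[h1 h2]; [right|left]; split => // /(_ h1).
Qed.

Section Part5.
Variables (R : realType) (H : completeNormedModType R).
Variable e : nat -> H.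
Variables (d : measure_display) (X : measurableType d) (phi : X -> H).
Variable mu : {measure set X -> \bar R}.
Hypothesis he : forall (y : H) (del : R), 0 < del -> exists n, `|e n - y| < del.
Hypothesis hG : forall p, measurable (Gs e phi p).

Local Notation Mp := (Mp phi).
Local Notation interp := (interp e phi).

Lemma Mp_meas : Mp `<=` measurable.
Proof. apply: (gen_sub he) => //; exact: sigma_algebra_measurable. Qed.

Lemma interp_Mp t : Mp (interp t).
Proof.
have sM := Mp_sigma phi.
move: t; apply: (interp_ind (e:=e) (P:=Mp)).
- by case: sM.
- by move=> A MA; rewrite -setTD; case: sM => _ hC _; exact: hC.
- by move=> A B MA MB; exact: (sig_setU sM MA MB).
- exact: Gs_Mp.
Qed.

Lemma interp_meas t : measurable (interp t).
Proof. exact: (Mp_meas (interp_Mp t)). Qed.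

Lemma symdiff_meas (A B : set X) : measurable A -> measurable B -> measurable (symdiff A B).
Proof. by move=> mA mB; apply: measurableU; apply: measurableD. Qed.

Lemma mono (A B : set X) : measurable A -> measurable B -> A `<=` B -> (mu A <= mu B)%E.
Proof. by move=> mA mB AB; apply: le_measure => //; rewrite inE. Qed.

Lemma half_sum (eps : R) : ((eps / 2)%:E + (eps / 2)%:E = eps%:E)%E.
Proof. by rewrite -EFinD; congr EFin; field. Qed.

Variable T : set X.
Hypothesis mT : measurable T.
Hypothesis fT : (mu T < +oo)%E.

Definition Good := [set E : set X | measurable E /\ forall eps : R, 0 < eps ->
  exists t, (mu (symdiff E (interp t) `&` T) < eps%:E)%E].

Lemma Good_setU (A B : set X) : Good A -> Good B -> Good (A `|` B).
Proof.
move=> [mA gA] [mB gB]; split; first exact: measurableU.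
move=> eps e0.
have e2 : 0 < eps / 2 by rewrite divr_gt0.
have [t1 h1] := gA _ e2; have [t2 h2] := gB _ e2.
exists (GenTree.Node 1 [:: t1; t2]) => /=.
have m1 := interp_meas t1; have m2 := interp_meas t2.
apply: (le_lt_trans (y := mu (symdiff A (interp t1) `&` T `|` symdiff B (interp t2) `&` T))).
  apply: mono.
  - by apply: measurableI => //; apply: symdiff_meas => //; apply: measurableU.
  - by apply: measurableU; apply: measurableI => //; apply: symdiff_meas.
  - move=> x [+ Tx]; rewrite /symdiff /setD /=.
    move=> [[[hA|hB] hn]|[[hA|hB] hn]].
    + by left; split => //; left; split => // ?; apply: hn; left.
    + by right; split => //; left; split => // ?; apply: hn; right.
    + by left; split => //; right; split => // ?; apply: hn; left.
    + by right; split => //; right; split => // ?; apply: hn; right.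
apply: (le_lt_trans (measureU2 _ _ _)).
- by apply: measurableI => //; apply: symdiff_meas.
- by apply: measurableI => //; apply: symdiff_meas.
by rewrite -half_sum; apply: lteD.
Qed.

Lemma Good_set0 : Good set0.
Proof.
split => // eps e0; exists (GenTree.Node 2 [::]) => /=.
rewrite (_ : symdiff set0 set0 `&` T = set0) ?measure0 ?lte_fin //.
by apply/seteqP; split => x // [[[]|[]]].
Qed.

Lemma Good_setC (A : set X) : Good A -> Good (setT `\` A).
Proof.
move=> [mA gA]; split; first exact: measurableD.
move=> eps e0; have [t ht] := gA _ e0; exists (GenTree.Node 0 [:: t]) => /=.
by rewrite setTD symdiffC_eq.
Qed.

Lemma Good_fin (F : nat -> set X) : (forall k, Good (F k)) ->
  forall n, Good (\bigcup_(k in [set k | (k < n)%N]) F k).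
Proof.
move=> gF; elim => [|n IH].
  rewrite (_ : \bigcup_(k in _) _ = set0); first exact: Good_set0.
  by apply/seteqP; split => x // [k /=].
rewrite (_ : \bigcup_(k in _) _ = \bigcup_(k in [set k | (k < n)%N]) F k `|` F n).
  exact: Good_setU.
apply/seteqP; split => x.
  move=> [k /= kn Fk]; move: kn; rewrite ltnS leq_eqVlt => /orP[/eqP ek|kn].
    by right; rewrite -ek.
  by left; exists k.
by move=> [[k /= kn Fk]|Fn]; [exists k => //=; exact: ltnW|exists n => /=].
Qed.

Lemma Good_bigcup (F : nat -> set X) : (forall k, Good (F k)) ->
  Good (\bigcup_k F k).
Proof.
move=> gF.
have mF : forall k, measurable (F k) by move=> k; case: (gF k).
have mE : measurable (\bigcup_k F k) by apply: bigcupT_measurable.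
split => // eps e0.
pose U n := \bigcup_(k in [set k | (k < n)%N]) F k.
have mU : forall n, measurable (U n) by move=> n; apply: bigcup_measurable => k _.
pose G n := (\bigcup_k F k `\` U n) `&` T.
have mG : forall n, measurable (G n).
  by move=> n; apply: measurableI => //; apply: measurableD.
have G0 : (mu (G 0%N) < +oo)%E.
  apply: le_lt_trans fT; apply: mono => //; exact: subIsetr.
have capG : \bigcap_n G n = set0.
  apply/seteqP; split => x // hx.
  have [[[k _ Fk] _] _] := hx 0%N I.
  have [[_ hn] _] := hx k.+1 I.
  by apply: hn; exists k => /=.
have niG : {homo G : n m / (n <= m)%N >-> (m <= n)%O}.
  move=> n m nm; apply/subsetPset => x [[hE hU] Tx]; split => //; split => //.
  move=> [k /= kn Fk]; apply: hU; exists k => //=; exact: leq_trans kn nm.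
have e2 : 0 < eps / 2 by rewrite divr_gt0.
have := nonincreasing_cvg_mu G0 mG _ niG; rewrite capG measure0 => /(_ measurable0).
move=> /ev_small /(_ _ e2) [N hN].
have [_ gU] := Good_fin gF N.
have [t ht] := gU _ e2.
exists t.
have mi := interp_meas t.
apply: (le_lt_trans (y := mu (G N `|` symdiff (U N) (interp t) `&` T))).
  apply: mono.
  - by apply: measurableI => //; apply: symdiff_meas.
  - by apply: measurableU => //; apply: measurableI => //; apply: symdiff_meas.
  - move=> x [+ Tx]; rewrite /symdiff /setD /=.
    move=> [[hE hn]|[hi hn]].
      have [hU|hU] := pselect (U N x).
        by right; split => //; left.
      by left; split => //.
    right; split => //; right; split => // hU; apply: hn.
    by case: hU => k _ Fk; exists k.
apply: (le_lt_trans (measureU2 _ _ _)) => //.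
  by apply: measurableI => //; apply: symdiff_meas.
by rewrite -half_sum; apply: lteD.
Qed.

Lemma Good_sigma : sigma_algebra setT Good.
Proof.
split; first exact: Good_set0.
  exact: Good_setC.
exact: Good_bigcup.
Qed.

Lemma Mp_Good : Mp `<=` Good.
Proof.
apply: (gen_sub he); first exact: Good_sigma.
move=> p; split; first exact: hG.
move=> eps e0; exists (GenTree.Leaf p) => /=.
rewrite (_ : symdiff _ _ `&` T = set0) ?measure0 ?lte_fin //.
by apply/seteqP; split => x // [[[]|[]]].
Qed.
End Part5.

Lemma sq_abs (R : realType) (c r : R) : 0 <= c -> (c ^+ 2 < r ^+ 2) <-> (c < `|r|).
Proof.
move=> c0; rewrite -(real_normK (num_real r)); have := normr_ge0 r.
move: `|r| => a a0; split => h; nra.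
Qed.

Lemma bigcup_ltS T (F : nat -> set T) n :
  \bigcup_(k in [set k | (k < n.+1)%N]) F k = \bigcup_(k in [set k | (k < n)%N]) F k `|` F n.
Proof.
apply/seteqP; split => x.
  move=> [k /= kn Fk]; move: kn; rewrite ltnS leq_eqVlt => /orP[/eqP ek|kn].
    by right; rewrite -ek.
  by left; exists k.
by move=> [[k /= kn Fk]|Fn]; [exists k => //=; exact: ltnW|exists n => /=].
Qed.

Section Part6.
Variables (R : realType) (H : completeNormedModType R) (hs : complex_hilbert H).
Variable e : nat -> H.
Hypothesis he : forall (y : H) (del : R), 0 < del -> exists n, `|e n - y| < del.
Variables (d : measure_display) (X : measurableType d) (phi : X -> H).
Variable mu : {measure set X -> \bar R}.
Hypothesis hre : forall f, measurable_fun setT (fun t => complex.Re (ip hs f (phi t))).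
Hypothesis him : forall f, measurable_fun setT (fun t => complex.Im (ip hs f (phi t))).
Variable B : R.
Hypothesis hbes : forall f,
  (\int[mu]_t (sqmod (ip hs f (phi t)))%:E <= (B * `|f| ^+ 2)%:E)%E.

Lemma hG p : measurable (Gs e phi p).
Proof. apply: (meas_ball (hs:=hs) he); first exact: hre. by rewrite invr_gt0. Qed.

Definition cc (N : nat) : R := (N.+1%:R)^-1.
Definition S (c : R) n := [set t | c ^+ 2 < re hs (e n) (phi t) ^+ 2].
Definition TT N := \bigcup_(n in [set n | (n < N)%N]) S (cc N) n.
Definition W := \bigcup_N TT N.
Definition Z := ~` W.

Lemma S_meas c n : measurable (S c n).
Proof. by apply: meas_gt; apply: measurable_realfun.measurable_funX; exact: hre. Qed.

Lemma S_fin c n : 0 < c -> (mu (S c n) < +oo)%E.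
Proof.
move=> c0.
pose g t := sqmod (ip hs (e n) (phi t)).
have mg : measurable_fun setT g.
  by apply: measurable_realfun.measurable_funD; apply: measurable_realfun.measurable_funX.
have mgE : measurable_fun [set: X] (EFin \o g : X -> \bar R) by apply/measurable_EFinP.
have mS := S_meas c n.
have h1 : ((c ^+ 2)%:E * mu (S c n) <= \int[mu]_t (g t)%:E)%E.
  rewrite -integral_cst //.
  apply: (@le_trans _ _ (\int[mu]_(x in S c n) (g x)%:E)%E).
    apply: ge0_le_integral => //.
    - by move=> x _; rewrite lee_fin sqr_ge0.
    - exact: measurable_funS mgE.
    - move=> x; rewrite /S /= => hx; rewrite lee_fin /g /sqmod.
      have := sqr_ge0 (complex.Im (ip hs (e n) (phi x))).
      rewrite /re in hx; lra.
  apply: ge0_subset_integral => //.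
  by move=> x _; rewrite lee_fin /g /sqmod addr_ge0 // sqr_ge0.
have h2 := le_trans h1 (hbes (e n)).
have c2 : 0 < c ^+ 2 by rewrite exprn_gt0.
move: h2 (measure_ge0 mu (S c n)); move: (mu (S c n)) => m.
case: m => [r| |] //; first by rewrite ltry.
by rewrite mulry gtr0_sg // mul1e leye_eq.
Qed.

Lemma cc_gt0 N : 0 < cc N.
Proof. by rewrite /cc invr_gt0. Qed.

Lemma cc_le N M : (N <= M)%N -> cc M <= cc N.
Proof. by move=> NM; rewrite /cc lef_pV2 ?posrE // ler_nat ltnS. Qed.

Lemma TT_meas N : measurable (TT N).
Proof. by apply: bigcup_measurable => n _; exact: S_meas. Qed.

Lemma TT_fin N : (mu (TT N) < +oo)%E.
Proof.
rewrite /TT.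
suff h : forall K, (mu (\bigcup_(n in [set n | (n < K)%N]) S (cc N) n) < +oo)%E by exact: h.
elim => [|K IH].
  rewrite (_ : \bigcup_(n in _) _ = set0) ?measure0 //.
  by apply/seteqP; split => x // [k /=].
rewrite bigcup_ltS.
apply: le_lt_trans (measureU2 _ _ _) _.
- by apply: bigcup_measurable => n _; exact: S_meas.
- exact: S_meas.
by apply: lte_add_pinfty => //; apply: S_fin; exact: cc_gt0.
Qed.

Lemma TT_Mp N : Mp phi (TT N).
Proof.
pose V := [set y | exists2 n, (n < N)%N & cc N < `|re hs (e n) y|].
have -> : TT N = phi @^-1` V.
  apply/seteqP; split => t.
    by move=> [n /= nN hn]; exists n => //; apply/sq_abs => //; exact: ltW (cc_gt0 N).
  by move=> [n nN hn]; exists n => //; apply/sq_abs => //; exact: ltW (cc_gt0 N).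
move=> SS [_ GS]; apply: GS; exists V => //.
rewrite openE => y [n nN hn]; rewrite /interior.
apply/nbhs_ballP; rewrite /nbhs_ball /nbhs_ball_ /filter_from /=.
set a := `|re hs (e n) y|.
set b := `|e n|.
have b1 : 0 < b + 1 by rewrite ltr_wpDl ?normr_ge0.
exists ((a - cc N) / (b + 1)); first by rewrite divr_gt0 // subr_gt0.
move=> z; rewrite -ball_normE /ball_ /= => hz.
exists n => //.
have h1 : a - `|re hs (e n) z| <= `|re hs (e n) (y - z)|.
  by rewrite re_subr; exact: lerB_dist.
have h2 := re_cs_abs hs (e n) (y - z).
have h3 : (a - cc N) / (b + 1) * (b + 1) = a - cc N by rewrite divfK // gt_eqF.
move: h1 h2 h3 hz; rewrite -/b.
set u := `|y - z|; set q := (a - cc N) / (b + 1).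
have u0 : 0 <= u by rewrite normr_ge0.
have b0 : 0 <= b by rewrite normr_ge0.
move=> h1 h2 h3 hz.
have : b * u <= b * q by rewrite ler_wpM2l // ltW.
nra.
Qed.

Lemma TT_mono N M : (N <= M)%N -> TT N `<=` TT M.
Proof.
move=> NM t [n /= nN hn]; exists n => /=; first exact: leq_trans nN NM.
move: hn; rewrite /S /= !sq_abs; [|exact: ltW (cc_gt0 _)|exact: ltW (cc_gt0 _)].
by apply: le_lt_trans; exact: cc_le.
Qed.

Lemma Z_char t : Z t <-> phi t = 0.
Proof.
split.
  move=> zt; apply: (re_zero (hs:=hs) he) => n.
  apply/eqP; apply/negP => /negP hn; apply: zt.
  have hp : 0 < `|re hs (e n) (phi t)| by rewrite normr_gt0.
  have [m hm] := small_inv hp.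
  exists (maxn m n.+1) => //; exists n => /=; first by rewrite leq_max leqnn orbT.
  apply/sq_abs; first exact: ltW (cc_gt0 _).
  apply: le_lt_trans hm; apply: cc_le; exact: leq_maxl.
move=> ht [N _ [n _]]; rewrite /S /= ht re0r expr0n /=.
by rewrite ltNge sqr_ge0.
Qed.

Lemma Mp_sat E : Mp phi E -> forall s t, phi s = phi t -> E s -> E t.
Proof.
move=> hE; apply: (smallest_sub (X := [set A | forall s t, phi s = phi t -> A s -> A t]) _ _ hE); last first.
  by move=> A [U _ <-] s t /= ->.
split => //.
- move=> A hA s t hst [_ nAs]; split => // At; apply: nAs; apply: (hA t s) => //.
- by move=> F hF s t hst [k _ Fk]; exists k => //; apply: (hF k s t).
Qed.
End Part6.

Lemma sig_setI T (SS : set (set T)) A B : sigma_algebra setT SS -> SS A -> SS B -> SS (A `&` B).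
Proof.
move=> sS SA SB; have [_ SC _] := sS.
have -> : A `&` B = setT `\` ((setT `\` A) `|` (setT `\` B)).
  rewrite !setTD setCU !setCK //.
by apply: (SC); apply: sig_setU => //; apply: (SC).
Qed.

Section Part7.
Variables (R : realType) (H : completeNormedModType R) (hs : complex_hilbert H).
Variable e : nat -> H.
Hypothesis he : forall (y : H) (del : R), 0 < del -> exists n, `|e n - y| < del.
Variables (d : measure_display) (X : measurableType d) (phi : X -> H).
Variable mu : {measure set X -> \bar R}.
Hypothesis hre : forall f, measurable_fun setT (fun t => complex.Re (ip hs f (phi t))).
Hypothesis him : forall f, measurable_fun setT (fun t => complex.Im (ip hs f (phi t))).
Variable B : R.
Hypothesis hbes : forall f,
  (\int[mu]_t (sqmod (ip hs f (phi t)))%:E <= (B * `|f| ^+ 2)%:E)%E.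

Local Notation TT := (TT hs e phi).
Local Notation Z := (Z hs e phi).
Local Notation W := (W hs e phi).

Lemma final : measure_algebra_separable (Mp phi) mu.
Proof.
have hG' := hG he hre.
have sM := Mp_sigma phi.
have MpM : Mp phi `<=` measurable := Mp_meas he hG'.
have WM : Mp phi W by case: sM => _ _; apply => N; exact: TT_Mp.
have ZM : Mp phi Z by rewrite /Z -setTD; case: sM => _ + _; apply.
pose f (x : GenTree.tree (nat * nat) * nat * bool) :=
  interp e phi x.1.1 `&` TT x.1.2 `|` (if x.2 then Z else set0).
exists [set F | Mp phi F /\ (mu F < +oo)%E /\ exists x, F = f x].
split.
  apply: (sub_countable (B := f @` setT)).
    by apply: subset_card_le => F [_ [_ [x ->]]]; exists x.
  exact: (card_le_trans (card_image_le f setT) (countableP _)).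
split; first by move=> F [? [? _]].
move=> E ME fE eps e0.
have mE := MpM _ ME.
have [b hb] : exists b : bool, forall t, Z t -> (E t <-> (if b then Z else set0) t).
  have [[z [Zz Ez]]|nz] := pselect (exists z, Z z /\ E z).
    exists true => t Zt; split => // _.
    apply: (Mp_sat ME (s := z)) => //.
    by rewrite (proj1 (Z_char hs he phi z) Zz) (proj1 (Z_char hs he phi t) Zt).
  by exists false => t Zt; split => // Et; apply: nz; exists t.
have Zb_M : Mp phi (if b then Z else set0) by case: (b); [exact: ZM | case: sM].
have ZbE : (if b then Z else set0) `<=` E.
  by move=> t Zbt; apply/(hb t) => //; move: Zbt; case: (b).
pose BB n := (E `\` TT n) `&` W.
have mW := MpM _ WM.
have TTf : forall n, (mu (TT n) < +oo)%E by move=> n; eapply TT_fin; eauto.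
have mTT n : measurable (TT n) by apply: MpM; exact: TT_Mp.
have mBB n : measurable (BB n) by apply: measurableI => //; apply: measurableD.
have BB0 : (mu (BB 0%N) < +oo)%E.
  by apply: le_lt_trans fE; apply: mono => // t [[]].
have capB : \bigcap_n BB n = set0.
  apply/seteqP; split => t // hx.
  have [[_ _] [N _ TN]] := hx 0%N I.
  by have [[_ nT] _] := hx N I.
have niB : {homo BB : n m / (n <= m)%N >-> (m <= n)%O}.
  move=> n m nm; apply/subsetPset => t [[Et nT] Wt]; split => //; split => //.
  by move=> Tn; apply: nT; apply: (TT_mono nm).
have e2 : 0 < eps / 2 by rewrite divr_gt0.
have := nonincreasing_cvg_mu BB0 mBB _ niB; rewrite capB measure0 => /(_ measurable0).
move=> /ev_small /(_ _ e2) [N hN].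
have [_ gE] := Mp_Good he hG' (mu := mu) (mTT N) (TTf N) ME.
have [t ht] := gE _ e2.
have mi := interp_meas he hG' t.
exists (f (t, N, b)).
  split.
    have h1 : Mp phi (interp e phi t) by exact: interp_Mp.
    have h2 : Mp phi (TT N) by exact: TT_Mp.
    exact: (sig_setU sM (sig_setI sM h1 h2) Zb_M).
  split; last by exists (t, N, b).
  apply: (@le_lt_trans _ _ (mu (TT N `|` E))).
    apply: mono.
    - by apply: measurableU; [apply: measurableI|exact: MpM].
    - exact: measurableU.
    - by move=> x [[_ Tx]|Zx]; [left|right; exact: ZbE].
  apply: le_lt_trans (measureU2 _ _ _) _ => //.
  by apply: lte_add_pinfty => //; exact: TTf.
have mF : measurable (f (t, N, b)).
  by apply: measurableU; [apply: measurableI|exact: MpM].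
apply: (@le_lt_trans _ _ (mu (symdiff E (interp e phi t) `&` TT N `|` BB N))).
  apply: mono.
  - exact: symdiff_meas.
  - by apply: measurableU => //; apply: measurableI => //; apply: symdiff_meas.
  - move=> x; rewrite /symdiff /setD /f /=.
    move=> [[Ex nF]|[Fx nE]].
      have Wx : W x.
        apply: contrapT => nW; apply: nF; right; apply/(hb x nW) => //.
      have [Tx|nTx] := pselect (TT N x).
        by left; split => //; left; split => // ix; apply: nF; left.
      by right.
    case: Fx => [[ix Tx]|Zx].
      by left; split => //; right.
    exfalso; apply: nE; exact: ZbE.
apply: le_lt_trans (measureU2 _ _ _) _ => //.
  by apply: measurableI => //; apply: symdiff_meas.
by rewrite -half_sum; apply: lteD.
Qed.
End Part7.

Theorem proposition2p3 (R : realType) (H : completeNormedModType R)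
  (hs : complex_hilbert H) (d : measure_display) (X : measurableType d)
  (mu : {measure set X -> \bar R}) (phi : X -> H) :
  separable_space H ->
  sigma_finite setT mu ->
  continuous_bessel mu hs phi ->
  measure_algebra_separable
    (smallest (sigma_algebra setT)
       [set phi @^-1` U | U in [set U : set H | open U]])
    mu.
Proof.
move=> [D [cD clD]] _ [hmeas [B hB]].
have [g hg] : exists g : nat -> H, D `<=` g @` setT.
  by have /pcard_surjP [g sg] := cD; exists g.
have he : forall (y : H) (del : R), 0 < del -> exists n, `|g n - y| < del.
  move=> y del del0.
  have : closure D y by rewrite clD.
  move=> /(_ (ball y del) (nbhsx_ballx _ _ del0)) [x [Dx bx]].
  have [n _ gx] := hg x Dx.
  exists n; move: bx; rewrite -ball_normE /ball_ /= -gx distrC //.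
have hre : forall f, measurable_fun setT (fun t => complex.Re (ip hs f (phi t))).
  by move=> f; case: (hmeas f).
have him : forall f, measurable_fun setT (fun t => complex.Im (ip hs f (phi t))).
  by move=> f; case: (hmeas f).
exact: (final he hre him hB).
Qed.
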